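(* Let $S,T$ be measurement scenarios and let $G_{S,T}$ be the set of global assignments $t\in\mathcal E_{[S,T]}(X_T)$ such that $\delta_t$ satisfies $g_{S,T}$. Then probabilistic procedures $S\to T$ correspond bijectively to probability distributions on $G_{S,T}$, via $\sum_ir_if_i\mapsto\sum_ir_i\delta_{t_{f_i}}$ where $t_f=((\pi_f(x),\alpha_{f,x}))_{x\in X_T}$. Moreover, the empirical models $\sum_ir_i\delta_{t_{f_i}}$ on $[S,T]$ arising from probabilistic procedures are exactly the non-contextual empirical models on $[S,T]$ that satisfy $g_{S,T}$.
   Context: A simplicial complex $\Sigma$ on a finite set $X$ is a family of subsets containing $\emptyset$ and all singletons, closed under subsets. A measurement scenario $S=(X_S,O_S,\Sigma_S)$: finite set $X_S$, finite non-empty outcome sets $O_{S,x}$, simplicial complex $\Sigma_S$ of contexts. $\mathcal E_S(U)=\prod_{x\in U}O_{S,x}$, restriction $s|_V$. An empirical model on $S$ is a family $(e_\sigma)_{\sigma\in\Sigma_S}$ of probability distributions on $\mathcal E_S(\sigma)$ compatible under marginalisation; $\delta_t$ is the model with $(\delta_t)_\sigma$ the point mass at $t|_\sigma$; a model is non-contextual if it is a convex combination of deterministic models $\delta_t$. A simplicial relation from $\Sigma$ (on $X$) to $\Delta$ (on $Y$) is a relation $R\subseteq X\times Y$ with $R(\sigma)\in\Delta$ for all $\sigma\in\Sigma$. A deterministic procedure $f\colon S\to T$ is a pair $(\pi_f,\alpha_f)$: $\pi_f$ a simplicial relation from $\Sigma_T$ to $\Sigma_S$ and $\alpha_{f,x}\colon\mathcal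 E_S(\pi_f(x))\to O_{T,x}$ for $x\in X_T$. A probabilistic procedure $S\to T$ is a finitely supported probability distribution on deterministic procedures $S\to T$, written $\sum_ir_if_i$. The scenario $[S,T]$ has $X_{[S,T]}=X_T$, $\Sigma_{[S,T]}=\Sigma_T$, $O_{[S,T],x}=\{(U,\beta):U\subseteq X_S,\ \beta\colon\mathcal E_S(U)\to O_{T,x}\}$. A model $e$ on $[S,T]$ satisfies $g_{S,T}$ iff for every $\sigma\in\Sigma_T$ and every $((U_x,\beta_x))_{x\in\sigma}$ in the support of $e_\sigma$, $\bigcup_{x\in\sigma}U_x\in\Sigma_S$. *)

(* Defs.v *)
From HB Require Import structures.
From mathcomp Require Import all_boot all_order all_algebra.
From mathcomp Require Import reals.
Set Implicit Arguments. Unset Strict Implicit. Unset Printing Implicit Defensive.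
Import Order.TTheory GRing.Theory Num.Theory.
Local Open Scope ring_scope.

Definition is_simplicial_complex (X : finType) (Sig : {set {set X}}) : Prop :=
  [/\ set0 \in Sig, (forall x : X, [set x] \in Sig) &
      (forall A B : {set X}, A \in Sig -> B \subset A -> B \in Sig)].

Record scenario := Scenario {
  sX : finType;
  sO : sX -> finType;
  sO_nonempty : forall x : sX, (0 < #|sO x|)%N;
  sSigma : {set {set sX}};
  sSigma_cplx : is_simplicial_complex sSigma }.

(* Partial assignments: a dependent function x |-> option (O x).
   An element of E_S(U) = prod_{x in U} O_{S,x} is represented as a partial
   assignment whose domain (the x with a value) is exactly U. *)
Definition assign (S : scenario) := {dffun forall x : sX S, option (@sO S x)}.

Definition dom_is (S : scenario) (U : {set sX S}) (s : assign S) : bool :=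
  [forall x, (s x != None) == (x \in U)].

Definition Asg (S : scenario) (U : {set sX S}) := {s : assign S | dom_is U s}.

Definition restrict_asg (S : scenario) (V : {set sX S}) (s : assign S) : assign S :=
  [ffun x => if x \in V then s x else None].

Definition is_dist (R : realType) (T : finType) (p : {ffun T -> R}) : Prop :=
  (forall t, 0 <= p t) /\ \sum_t p t = 1.

(* Families (e_sigma) indexed by subsets; only sigma in Sigma_S matter. *)
Definition emp_model (R : realType) (S : scenario) :=
  forall sigma : {set sX S}, {ffun Asg sigma -> R}.

Definition model_eq (R : realType) (S : scenario) (e e' : emp_model R S) : Prop :=
  forall sigma, sigma \in sSigma S -> e sigma = e' sigma.

Definition is_model (R : realType) (S : scenario) (e : emp_model R S) : Prop :=
  forall sigma, sigma \in sSigma S ->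
    is_dist (e sigma) /\
    (forall tau, tau \in sSigma S -> tau \subset sigma ->
       forall s' : Asg tau,
         e tau s' = \sum_(s : Asg sigma | restrict_asg tau (val s) == val s') e sigma s).

Definition det_model (R : realType) (S : scenario) (t : Asg [set: sX S]) : emp_model R S :=
  fun sigma => [ffun s : Asg sigma => if val s == restrict_asg sigma (val t) then 1 else 0].

Definition mix_model (R : realType) (S : scenario) (d : {ffun Asg [set: sX S] -> R})
  : emp_model R S :=
  fun sigma => [ffun s : Asg sigma => \sum_t d t * det_model R t sigma s].

Definition noncontextual (R : realType) (S : scenario) (e : emp_model R S) : Prop :=
  exists d : {ffun Asg [set: sX S] -> R}, is_dist d /\ model_eq e (mix_model d).

Definition homO (S T : scenario) (x : sX T) : finType :=
  {U : {set sX S} & {ffun Asg U -> @sO T x}}.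

Lemma homO_nonempty (S T : scenario) (x : sX T) : (0 < #|homO S x|)%N.
Proof.
case/card_gt0P: (sO_nonempty x) => o _.
apply/card_gt0P.
by exists (@Tagged _ set0 (fun U : {set sX S} => {ffun Asg U -> @sO T x}) [ffun _ => o]).
Qed.

Definition scen_hom (S T : scenario) : scenario :=
  @Scenario (sX T) (@homO S T) (@homO_nonempty S T) (sSigma T) (sSigma_cplx T).

Definition outset (S T : scenario) (x : sX T) (o : option (homO S x))
  : {set sX S} := oapp (@tag _ _) set0 o.

Definition satg (R : realType) (S T : scenario) (e : emp_model R (scen_hom S T)) : bool :=
  [forall sigma in sSigma T, forall s : Asg (S := scen_hom S T) sigma,
     (e sigma s != 0) ==>
       ((\bigcup_(x in sigma) outset (S := S) (val s x)) \in sSigma S)].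

Definition Gtype (R : realType) (S T : scenario) :=
  {t : Asg (S := scen_hom S T) [set: sX T] | satg (det_model R t)}.

Definition relimg (X Y : finType) (Rl : {set X * Y}) (A : {set X}) : {set Y} :=
  [set y | [exists x in A, (x, y) \in Rl]].

Definition simplicial_rel (S T : scenario) (Rl : {set sX T * sX S}) : bool :=
  [forall sigma in sSigma T, relimg Rl sigma \in sSigma S].

Definition srel (S T : scenario) := {Rl : {set sX T * sX S} | simplicial_rel Rl}.

Definition proc (S T : scenario) :=
  {rl : srel S T &
     {dffun forall x : sX T, {ffun Asg (relimg (val rl) [set x]) -> @sO T x}}}.

Definition pi_f (S T : scenario) (f : proc S T) : {set sX T * sX S} := val (tag f).

Definition t_raw (S T : scenario) (f : proc S T) : assign (scen_hom S T) :=
  [ffun x => Some (@Tagged _ (relimg (pi_f f) [set x])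
                          (fun U : {set sX S} => {ffun Asg U -> @sO T x})
                          (tagged f x))].

Lemma t_raw_dom (S T : scenario) (f : proc S T) : @dom_is (scen_hom S T) [set: sX T] (t_raw f).
Proof. by apply/forallP => x; rewrite ffunE in_setT. Qed.

Definition t_of (S T : scenario) (f : proc S T) : Asg (S := scen_hom S T) [set: sX T] :=
  exist _ (t_raw f) (t_raw_dom f).

Definition proc_to_G (R : realType) (S T : scenario) (p : {ffun proc S T -> R})
  : {ffun Gtype R S T -> R} :=
  [ffun g => \sum_f p f * (val g == t_of f)%:R].

Definition pmodel (R : realType) (S T : scenario) (p : {ffun proc S T -> R})
  : emp_model R (scen_hom S T) :=
  fun sigma => [ffun s => \sum_f p f * det_model R (t_of f) sigma s].

(* Main.v *)
Require Import Defs.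
From HB Require Import structures.
From mathcomp Require Import all_boot all_order all_algebra.
From mathcomp Require Import reals.
Import Order.TTheory GRing.Theory Num.Theory.
Local Open Scope ring_scope.
Set Implicit Arguments. Unset Strict Implicit. Unset Printing Implicit Defensive.

Lemma sum_delta (R : realType) (B : finType) (F : B -> R) (c : B) :
  \sum_b F b * (b == c)%:R = F c.
Proof.
rewrite (bigD1 c) //= eqxx mulr1 big1 ?addr0 // => b /negPf ->.
by rewrite mulr0.
Qed.

Lemma sum_inj (R : realType) (A B : finType) (h : A -> B) (F : B -> R) :
  injective h -> (forall b, F b != 0 -> exists a, b = h a) ->
  \sum_b F b = \sum_a F (h a).
Proof.
move=> hinj hs.
transitivity (\sum_b \sum_a F b * (b == h a)%:R).
  apply: eq_bigr => b _.
  have [->|nz] := eqVneq (F b) 0.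
    by rewrite big1 // => a _; rewrite mul0r.
  have [a0 ->] := hs b nz.
  rewrite (bigD1 a0) //= eqxx mulr1 big1 ?addr0 // => a /negPf na.
  by rewrite (inj_eq hinj) eq_sym na mulr0.
rewrite exchange_big; apply: eq_bigr => a _.
exact: sum_delta.
Qed.

Lemma relimg1 (X Y : finType) (Rl : {set X * Y}) x y :
  (y \in relimg Rl [set x]) = ((x, y) \in Rl).
Proof.
rewrite inE; apply/existsP/idP => [[x' /andP[/set1P -> //]]|H].
by exists x; rewrite inE eqxx.
Qed.

Lemma bigcup_relimg (X Y : finType) (Rl : {set X * Y}) (A : {set X}) :
  \bigcup_(x in A) relimg Rl [set x] = relimg Rl A.
Proof.
apply/setP => y; apply/bigcupP/idP.
  move=> [x xA]; rewrite relimg1 => H.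
  by rewrite inE; apply/existsP; exists x; rewrite xA.
rewrite inE => /existsP[x /andP[xA H]]; exists x => //.
by rewrite relimg1.
Qed.

Lemma restr_dom (S : scenario) (sigma : {set sX S}) (t : Asg [set: sX S]) :
  dom_is sigma (restrict_asg sigma (val t)).
Proof.
apply/forallP => x; rewrite ffunE.
case xin: (x \in sigma) => //=.
by have := forallP (valP t) x; rewrite in_setT.
Qed.

Definition restrA (S : scenario) (sigma : {set sX S}) (t : Asg [set: sX S])
  : Asg sigma := exist (fun s => dom_is sigma s) _ (restr_dom sigma t).

Lemma det_dist (R : realType) (S : scenario) (t : Asg [set: sX S]) (sigma : {set sX S}) :
  is_dist (det_model R t sigma).
Proof.
split=> [s|]; first by rewrite ffunE; case: eqP.
rewrite (bigD1 (restrA sigma t)) //= ffunE eqxx big1 ?addr0 // => s ns.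
rewrite ffunE; case: eqP => // E; case/eqP: ns; exact: val_inj.
Qed.

Lemma restr_restr (S : scenario) (tau sigma : {set sX S}) (v : assign S) :
  tau \subset sigma -> restrict_asg tau (restrict_asg sigma v) = restrict_asg tau v.
Proof.
move=> sub; apply/ffunP => x; rewrite !ffunE.
case xt: (x \in tau) => //; by rewrite (subsetP sub x xt).
Qed.

Lemma det_marg (R : realType) (S : scenario) (t : Asg [set: sX S]) (sigma tau : {set sX S})
  (s' : Asg tau) : tau \subset sigma ->
  det_model R t tau s' =
  \sum_(s : Asg sigma | restrict_asg tau (val s) == val s') det_model R t sigma s.
Proof.
move=> sub; rewrite big_mkcond (bigD1 (restrA sigma t)) //= big1 ?addr0.
  rewrite !ffunE eqxx /= restr_restr //.
  by rewrite eq_sym; case: eqP.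
move=> s ns; rewrite ffunE; case: ifP => // _.
case: eqP => // E; case/eqP: ns; exact: val_inj.
Qed.

Lemma mix_is_model (R : realType) (S : scenario) (d : {ffun Asg [set: sX S] -> R}) :
  is_dist d -> is_model (mix_model d).
Proof.
move=> [d0 d1] sigma _; split.
  split=> [s|].
    rewrite ffunE; apply: sumr_ge0 => t _; apply: mulr_ge0 => //.
    by case: (det_dist R t sigma) => H _; apply: H.
  under eq_bigr do rewrite ffunE.
  rewrite exchange_big /= -d1; apply: eq_bigr => t _.
  by rewrite -mulr_sumr; case: (det_dist R t sigma) => _ ->; rewrite mulr1.
move=> tau _ sub s'; rewrite ffunE.
under [RHS]eq_bigr do rewrite ffunE.
rewrite exchange_big /=; apply: eq_bigr => t _.
by rewrite -mulr_sumr (det_marg _ _ s' sub).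
Qed.

Lemma satg_det (R : realType) (S T : scenario) (t : Asg (S := scen_hom S T) [set: sX T]) :
  (forall sigma, sigma \in sSigma T -> forall s : Asg (S := scen_hom S T) sigma,
     val s = restrict_asg (S := scen_hom S T) sigma (val t) ->
     (\bigcup_(x in sigma) outset (S := S) (val s x)) \in sSigma S) ->
  satg (det_model R t).
Proof.
move=> H; apply/forallP => sigma; apply/implyP => Hs; apply/forallP => s.
apply/implyP; rewrite ffunE; case: ifP => [/eqP E _|]; last by rewrite eqxx.
exact: H.
Qed.

Lemma t_of_G (R : realType) (S T : scenario) (f : proc S T) :
  satg (det_model R (t_of f)).
Proof.
apply: satg_det => sigma Hs s Es.
have -> : \bigcup_(x in sigma) outset (S := S) (val s x) = relimg (pi_f f) sigma.
  rewrite -bigcup_relimg; apply: eq_bigr => x xin.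
  by rewrite Es !ffunE xin /=.
by have := forallP (valP (tag f)) sigma; rewrite Hs.
Qed.

Lemma t_of_inj (S T : scenario) : injective (@t_of S T).
Proof.
move=> f f' H.
have Hx : forall x, t_raw f x = t_raw f' x by move=> x; rewrite -[t_raw f]/(val (t_of f)) H.
have Ht : forall x, Tagged (fun U : {set sX S} => {ffun Asg U -> @sO T x})
                          (tagged f x) =
                    Tagged (fun U : {set sX S} => {ffun Asg U -> @sO T x})
                          (tagged f' x).
  by move=> x; have := Hx x; rewrite !ffunE => -[].
have Hp : pi_f f = pi_f f'.
  apply/setP => -[x y]; have /= E := congr1 (@tag _ _) (Ht x).
  by rewrite -!relimg1 E.
move: f f' Ht Hp {H Hx} => [[Rl hRl] a] [[Rl' hRl'] a'] /= Ht Hp.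
rewrite /pi_f /= in Hp; subst Rl'.
have E : hRl' = hRl by apply: bool_irrelevance.
subst hRl'.
have -> // : a = a'.
apply/ffunP => x; have := congr1 (@tagged_as {set sX S} (fun U : {set sX S} => {ffun Asg U -> sO x})
   (Tagged (fun U : {set sX S} => {ffun Asg U -> sO x}) (a x))) (Ht x).
by rewrite !tagged_asE.
Qed.

Lemma G_surj (R : realType) (S T : scenario) (t : Asg (S := scen_hom S T) [set: sX T]) :
  satg (det_model R t) -> exists f : proc S T, t_of f = t.
Proof.
move=> Hg.
pose Rl : {set sX T * sX S} := [set p | p.2 \in outset (S := S) (val t p.1)].
have Rl1 : forall x, relimg Rl [set x] = outset (S := S) (val t x).
  by move=> x; apply/setP => y; rewrite relimg1 inE.
have simp : simplicial_rel Rl.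
  apply/forallP => sigma; apply/implyP => Hs.
  have := forallP (implyP (forallP Hg sigma) Hs) (@restrA (scen_hom S T) sigma t).
  rewrite ffunE eqxx /= oner_neq0 /= -bigcup_relimg.
  suff -> : \bigcup_(x in sigma) relimg Rl [set x] =
     \bigcup_(x in sigma) outset (S := S) (restrict_asg (S := scen_hom S T) sigma (sval t) x) by [].
  apply: eq_bigr => x xin.
  by rewrite Rl1 ffunE xin.
have : forall x, exists a : {ffun Asg (relimg Rl [set x]) -> @sO T x},
    val t x = Some (Tagged (fun U : {set sX S} => {ffun Asg U -> @sO T x}) a).
  move=> x; rewrite Rl1.
  have := forallP (valP t) x; rewrite in_setT.
  case: (val t x) => [[U b]|] //= _.
  by exists b.
move=> /fin_all_exists [alpha Ha].
exists (existT _ (exist _ Rl simp) (finfun alpha)).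
apply: val_inj; apply/ffunP => x; rewrite /= ffunE Ha ffunE.
by [].
Qed.

Theorem mainTheorem9 (R : realType) (S T : scenario) :
  [/\ (forall p : {ffun proc S T -> R}, is_dist p -> is_dist (proc_to_G p)),
      (forall p p' : {ffun proc S T -> R},
         is_dist p -> is_dist p' -> proc_to_G p = proc_to_G p' -> p = p'),
      (forall q : {ffun Gtype R S T -> R}, is_dist q ->
         exists p : {ffun proc S T -> R}, is_dist p /\ proc_to_G p = q) &
      (forall e : emp_model R (scen_hom S T),
         (exists p : {ffun proc S T -> R}, is_dist p /\ model_eq e (pmodel p))
         <-> [/\ is_model e, noncontextual e & satg e])].
Proof.
pose h (f : proc S T) : Gtype R S T := exist _ (t_of f) (t_of_G R f).
have hinj : injective h by move=> f f' /(congr1 val) /t_of_inj.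
have hsurj : forall g, exists f, g = h f.
  move=> g; have [f Ef] := G_surj (valP g).
  by exists f; apply: val_inj; rewrite /= Ef.
have E : forall (g : Gtype R S T) (f : proc S T), (val g == t_of f) = (g == h f) by [].
have PG : forall (p : {ffun proc S T -> R}) (f : proc S T), proc_to_G p (h f) = p f.
  move=> p f; rewrite ffunE.
  under eq_bigr do rewrite E (inj_eq hinj) eq_sym.
  exact: sum_delta.
split.
- move=> p [p0 p1]; split=> [g|].
    by rewrite ffunE; apply: sumr_ge0 => f _; apply: mulr_ge0.
  rewrite (@sum_inj R _ _ h _ hinj); last by move=> b _; apply: hsurj.
  by under eq_bigr do rewrite PG.
- move=> p p' _ _ Hp; apply/ffunP => f.
  by rewrite -!PG Hp.
- move=> q [q0 q1]; exists [ffun f => q (h f)]; split.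
    split=> [f|]; first by rewrite ffunE.
    rewrite -q1 (@sum_inj R _ _ h _ hinj); last by move=> b _; apply: hsurj.
    by under eq_bigr do rewrite ffunE.
  apply/ffunP => g; have [f ->] := hsurj g.
  by rewrite PG ffunE.
move=> e; split.
- move=> [p [[p0 p1] He]].
  pose d : {ffun Asg (S := scen_hom S T) [set: sX T] -> R} :=
    [ffun t => \sum_f p f * (t == t_of f)%:R].
  have dist_d : is_dist d.
    split=> [t|].
      by rewrite ffunE; apply: sumr_ge0 => f _; apply: mulr_ge0.
    under eq_bigr do rewrite ffunE.
    rewrite exchange_big -[RHS]p1; apply: eq_bigr => f _ /=.
    exact: sum_delta.
  have Pm : forall sigma, pmodel p sigma = mix_model d sigma.
    move=> sigma; apply/ffunP => s; rewrite !ffunE.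
    under [RHS]eq_bigr do rewrite ffunE mulr_suml.
    rewrite exchange_big; apply: eq_bigr => f _ /=.
    under eq_bigr do rewrite -mulrA mulrC -mulrA.
    rewrite (eq_bigr (fun i => (det_model R i sigma s * p f) * (i == t_of f)%:R)).
      by rewrite sum_delta mulrC.
    by move=> i _; rewrite mulrC.
  have Hem : model_eq e (mix_model d) by move=> sigma Hs; rewrite He // Pm.
  split.
  + move=> sigma Hs; have [[D0 D1] M] := mix_is_model dist_d Hs.
    rewrite (Hem _ Hs); split=> // tau Ht sub s'.
    by rewrite (Hem _ Ht) M.
  + by exists d.
  + apply/forallP => sigma; apply/implyP => Hs; apply/forallP => s; apply/implyP.
    rewrite (He _ Hs) ffunE => nz.
    case: (pickP (fun f => p f * det_model R (t_of f) sigma s != 0)) => [f nzf|none]; last first.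
      case/negP: nz; apply/eqP; rewrite big1 // => f _.
      by have := none f => /= /negbFE/eqP.
    have nzd : det_model R (t_of f) sigma s != 0.
      by apply: contraNneq nzf => ->; rewrite mulr0.
    by have := forallP (implyP (forallP (t_of_G R f) sigma) Hs) s => /implyP; apply.
- move=> [Hm [d [[d0 d1] Hd]] Hse].
  have dG : forall t, d t != 0 -> satg (det_model R t).
    move=> t nz; apply: satg_det => sigma Hs s Es.
    have := forallP (implyP (forallP Hse sigma) Hs) s => /implyP; apply.
    rewrite (Hd _ Hs) ffunE; apply: lt0r_neq0.
    rewrite (bigD1 t) //= ffunE Es eqxx mulr1.
    apply: ltr_pwDl; first by rewrite lt0r nz d0.
    apply: sumr_ge0 => i _; apply: mulr_ge0 => //.
    by case: (@det_dist R (scen_hom S T) i sigma) => H _; apply: H.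
  have hd : forall t, d t != 0 -> exists f, t = t_of f.
    by move=> t /dG /G_surj [f <-]; exists f.
  exists [ffun f => d (t_of f)]; split.
    split=> [f|]; first by rewrite ffunE.
    rewrite -d1 (@sum_inj R _ _ (@t_of S T) _ (@t_of_inj S T)) //.
    by apply: eq_bigr => f _; rewrite ffunE.
  move=> sigma Hs; rewrite (Hd _ Hs); apply/ffunP => s; rewrite !ffunE.
  rewrite (@sum_inj R _ _ (@t_of S T) (fun t => d t * det_model R t sigma s) (@t_of_inj S T)).
    by apply: eq_bigr => f _; rewrite [in RHS]ffunE.
  move=> b nzb; apply: hd; apply: contraNneq nzb => ->; by rewrite mul0r.
Qed.
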